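(* Let $q$ be an odd positive integer, let $\omega_q = e^{\mathrm{i}2\pi/q}$, and let $m < q$ be a positive integer. Let $\mathbf{V}$ be the $m\times m$ Vandermonde matrix with $\mathbf{V}(i,j) = s_j^{\,i}$ for $i,j\in\{0,\dots,m-1\}$, where $s_0,\dots,s_{m-1}$ are distinct elements of $\{1,\omega_q,\omega_q^2,\dots,\omega_q^{q-1}\}$. Then, with $c_1 = 5.5$, $$\kappa(\mathbf{V}) \le O\!\left(q^{\,q-m+c_1}\right),$$ i.e. there is an absolute constant $C$ (independent of $q$, $m$ and the choice of the $s_j$) such that $\kappa(\mathbf{V}) \le C\, q^{\,q-m+5.5}$.
   Context: For a square matrix $\mathbf{M}$, $\|\mathbf{M}\|$ denotes its largest singular value and the condition number is $\kappa(\mathbf{M}) = \|\mathbf{M}\|\,\|\mathbf{M}^{-1}\|$ (infinite if $\mathbf{M}$ is singular). $\mathrm{i}=\sqrt{-1}$. *)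

(* Defs.v *)
From HB Require Import structures.
From mathcomp Require Import all_boot all_order all_algebra.
From mathcomp Require Import all_classical all_reals.
From mathcomp Require Import trigo exp.
From mathcomp Require Import complex.
Set Implicit Arguments. Unset Strict Implicit. Unset Printing Implicit Defensive.
Import Order.TTheory GRing.Theory Num.Theory.
Local Open Scope ring_scope.
Local Open Scope complex_scope.

Section Defs.
Variable R : realType.

Definition omega (q : nat) : R[i] :=
  (cos (2 * pi / q%:R)) +i* (sin (2 * pi / q%:R)).

Definition adjmx (m n : nat) (M : 'M[R[i]]_(m, n)) : 'M[R[i]]_(n, m) :=
  (map_mx (@conjc R) M)^T.

(* largest singular value: square root of the largest eigenvalue of M^* M
   (these eigenvalues are real and nonnegative) *)
Definition sigma_max (n : nat) (M : 'M[R[i]]_n) : R :=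
  Num.sqrt (sup [set x : R | eigenvalue (adjmx M *m M) (x%:C)]).

Definition cond_number (n : nat) (M : 'M[R[i]]_n) : \bar R :=
  if M \in unitmx then (sigma_max M * sigma_max (invmx M))%:E else +oo%E.

Definition vandermonde (m : nat) (s : 'I_m -> R[i]) : 'M[R[i]]_m :=
  \matrix_(i < m, j < m) (s j) ^+ i.
End Defs.

(* Main.v *)
Require Import Defs.
From HB Require Import structures.
From mathcomp Require Import all_boot all_order all_algebra.
From mathcomp Require Import all_classical all_reals.
From mathcomp Require Import trigo exp.
From mathcomp Require Import complex.
From mathcomp Require Import ring zify lra.
Import Order.TTheory GRing.Theory Num.Theory.
Local Open Scope ring_scope.


Lemma coef_div_bound (F : numFieldType) (G Q : {poly F}) (z : F) :
  `|z| = 1 -> G = Q * ('X - z%:P) ->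
  forall i, `|Q`_i| <= \sum_(l < i.+1) `|G`_l|.
Proof.
move=> nz ->; elim=> [|i IH].
  rewrite big_ord1 mulrBr coefB coefMX coefMC /= sub0r normrN normrM nz mulr1.
  by [].
rewrite big_ord_recr /=.
have -> : Q`_i.+1 = z^-1 * (Q`_i - (Q * ('X - z%:P))`_i.+1).
  rewrite [Q * _]mulrBr coefB coefMX coefMC /= opprB addrC subrK.
  have z0 : z != 0 by rewrite -normr_eq0 nz oner_eq0.
  by rewrite [RHS]mulrC mulfK.
rewrite normrM normfV nz invr1 mul1r.
apply: (le_trans (ler_normB _ _)); exact: lerD.
Qed.

Lemma sum_bin (i k : nat) :
  (\sum_(l < i.+1) 'C(l + k, k) = 'C(i + k.+1, k.+1))%N.
Proof.
elim: i => [|i IH]; first by rewrite big_ord1 add0n binn add0n binn.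
rewrite big_ord_recr /= IH.
by rewrite [in RHS]addSn binS addSnnS.
Qed.

Lemma coef_prod_bound (F : numFieldType) (zs : seq F) :
  (forall z, z \in zs -> `|z| = 1) ->
  forall (N : {poly F}) k,
  (forall l, `|(N * \prod_(z <- zs) ('X - z%:P))`_l| <= ('C(l + k, k))%:R) ->
  forall i, `|N`_i| <= ('C(i + (k + size zs), k + size zs))%:R.
Proof.
elim: zs => [|z zs IH] zs1 N k H i.
  by move: (H i); rewrite big_nil mulr1 addn0.
have z1 : `|z| = 1 by apply: zs1; rewrite inE eqxx.
have zs1' : forall y, y \in zs -> `|y| = 1.
  by move=> y yin; apply: zs1; rewrite inE yin orbT.
rewrite /= addnS -addSn; apply: (IH zs1' N k.+1) => l.
have E : N * \prod_(y <- z :: zs) ('X - y%:P) =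
    (N * \prod_(y <- zs) ('X - y%:P)) * ('X - z%:P).
  by rewrite big_cons mulrCA mulrC.
apply: le_trans; first exact: (coef_div_bound _ _ _ _ z1 E l).
rewrite -sum_bin natr_sum; apply: ler_sum => j _; exact: H.
Qed.

Lemma pow2_fact r : (2 ^ r <= 2 * r`!)%N.
Proof.
elim: r => [|r IH] //. rewrite expnS factS.
have := fact_gt0 r. case: r IH => [|r] IH _ //=. nia.
Qed.
Lemma ffact_le_exp n r : (n ^_ r <= n ^ r)%N.
Proof.
elim: r n => [|r IH] n //. rewrite ffactnS expnS leq_mul2l.
case: n => [|n] //=; apply: (leq_trans (IH n)).
case: r {IH} => [|r]; first by []. by rewrite leq_exp2r.
Qed.
Lemma bin_pow2 n r : ('C(n, r) * 2 ^ r <= 2 * n ^ r)%N.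
Proof.
apply: (leq_trans (leq_mul (leqnn _) (pow2_fact r))).
rewrite mulnCA bin_ffact leq_mul2l ffact_le_exp orbT //.
Qed.

Section S_H2.
Local Open Scope complex_scope.


Lemma eig_bound (R : realType) n (M : 'M[R[i]]_n) (b : R) (x : R) :
  0 <= b -> (forall i j, `|M i j| <= b%:C) ->
  eigenvalue (adjmx M *m M) x%:C -> x <= (n%:R * b) ^+ 2.
Proof.
move=> b0 Mb /eigenvalueP [v Hv v0].
set G := adjmx M *m M in Hv.
have Gb : forall l k, `|G l k| <= n%:R * (b%:C) ^+ 2.
  move=> l k; rewrite /G mxE.
  apply: (le_trans (ler_norm_sum _ _ _)).
  apply: (le_trans (y := \sum_(i < n) b%:C ^+ 2)); last first.
    by rewrite sumr_const card_ord mulr_natl.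
  apply: ler_sum => i _.
  rewrite /adjmx !mxE normrM normcJ expr2.
  apply: ler_pM => //; exact: Mb.
set sig := \sum_(k < n) `|v 0 k|.
have sig0 : 0 < sig.
  rewrite lt_def sumr_ge0 ?andbT //; apply/negP => /eqP /psumr_eq0P H.
  move/negP: v0; apply; apply/eqP/matrixP => i k.
  rewrite (ord1 i) mxE; apply/eqP; rewrite -normr_eq0 H //.
have H1 : `|x%:C| * sig <= n%:R * (n%:R * (b%:C) ^+ 2) * sig.
  rewrite /sig mulr_sumr.
  have -> : \sum_(k < n) `|x%:C| * `|v 0 k| = \sum_(k < n) `|(v *m G) 0 k|.
    by apply: eq_bigr => k _; rewrite Hv mxE normrM.
  apply: (le_trans (y := \sum_(k < n) \sum_(l < n) `|v 0 l| * (n%:R * (b%:C) ^+ 2))).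
    apply: ler_sum => k _; rewrite mxE.
    apply: (le_trans (ler_norm_sum _ _ _)); apply: ler_sum => l _.
    rewrite normrM; apply: ler_pM => //.
  by rewrite -mulr_suml sumr_const card_ord; rewrite le_eqVlt; apply/orP; left; apply/eqP; ring.
rewrite ler_pM2r // in H1.
have xr : x%:C \is Num.real by rewrite complex_real.
rewrite -lecR; apply: (le_trans (real_ler_norm xr)); apply: (le_trans H1).
rewrite rmorphXn rmorphM /= rmorph_nat le_eqVlt; apply/orP; left; apply/eqP; ring.
Qed.

Lemma sigma_bound (R : realType) n (M : 'M[R[i]]_n) (b : R) :
  0 <= b -> (forall i j, `|M i j| <= b%:C) -> sigma_max M <= n%:R * b.
Proof.
move=> b0 Mb; rewrite /sigma_max.
have nb0 : 0 <= n%:R * b by rewrite mulr_ge0.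
rewrite -(ger0_norm nb0) -sqrtr_sqr; apply: ler_wsqrtr.
set S := [set x : R | _]%classic.
case: (pselect (S !=set0)%classic) => [ne|e].
  apply: ge_sup; first exact: ne.
  move=> x Sx; exact: (eig_bound _ _ _ _ _ b0 Mb Sx).
rewrite (_ : S = set0%classic); first by rewrite sup0 sqr_ge0.
apply/seteqP; split => x // Sx; exfalso; apply: e; by exists x.
Qed.

End S_H2.

Section S_H3.
Local Open Scope complex_scope.


Lemma omega_exp (R : realType) q k :
  omega R q ^+ k = cos ((2 * pi / q%:R) *+ k) +i* sin ((2 * pi / q%:R) *+ k).
Proof.
elim: k => [|k IH]; first by rewrite expr0 !mulr0n cos0 sin0.
rewrite exprSr IH /omega; set t := (_ * pi / q%:R).
rewrite [t *+ k.+1]mulrSr cosD sinD.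
simpc. by congr (_ +i* _); rewrite addrC.
Qed.

Lemma omega_q (R : realType) q : (0 < q)%N -> omega R q ^+ q = 1.
Proof.
move=> q0; rewrite omega_exp.
have -> : (2 * pi / q%:R) *+ q = pi *+ 2 :> R.
  rewrite -mulr_natr divfK ?pnatr_eq0 -?lt0n // mulr_natl //.
by rewrite cos2pi sin2pi.
Qed.

End S_H3.


Lemma geomA (F : fieldType) (c : F) (q : nat) :
  c ^+ q = 1 ->
  \poly_(l < q) c ^+ (q.-1 - l) * ('X - c%:P) = 'X^q - 1.
Proof.
move=> cq.
have -> : 'X^q - 1 = ('X : {poly F}) ^+ q - (c%:P) ^+ q by rewrite -rmorphXn /= cq.
rewrite subrXX mulrC; congr (_ * _).
rewrite poly_def (reindex_inj rev_ord_inj) /=.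
apply: eq_bigr => i _.
have iq := ltn_ord i.
rewrite -rmorphXn /= mulrC mul_polyC; congr (_ *: 'X^_).
  congr (c ^+ _); rewrite subnS; lia.
lia.
Qed.

Lemma prod_norm_le2 (F : numFieldType) (x : F) (zs : seq F) :
  `|x| = 1 -> (forall z, z \in zs -> `|z| = 1) ->
  `|\prod_(z <- zs) (x - z)| <= 2 ^+ size zs.
Proof.
move=> x1; elim: zs => [|z zs IH] H; first by rewrite big_nil normr1 expr0.
rewrite big_cons normrM /= exprS; apply: ler_pM => //.
  apply: (le_trans (ler_normB _ _)); rewrite x1 H ?inE ?eqxx //.
apply: IH => y yin; apply: H; rewrite inE yin orbT //.
Qed.

Lemma leq_pow_base a b r : (a <= b)%N -> (a ^ r <= b ^ r)%N.
Proof. move=> ab; elim: r => [|r IH] //; rewrite !expnS leq_mul //. Qed.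

Definition Npoly (F : fieldType) m (s : 'I_m -> F) (j : 'I_m) : {poly F} :=
  \prod_(k | k != j) ('X - (s k)%:P).
Definition Dval (F : fieldType) m (s : 'I_m -> F) (j : 'I_m) : F :=
  \prod_(k | k != j) (s j - s k).
Arguments Npoly {F m} s j.
Arguments Dval {F m} s j.


Lemma lag (R : realType) q m (s : 'I_m -> R[i]) (j : 'I_m) :
  (m <= q)%N -> injective s -> (forall k, s k ^+ q = 1) ->
  [/\ Dval s j != 0, size (Npoly s j) = m &
   forall i : 'I_m, `|(Dval s j)^-1 * (Npoly s j)`_i| <= 2 * q%:R ^+ (q - m)].
Proof.
move=> mq sinj sq1.
have m0 : (0 < m)%N by apply: leq_ltn_trans (ltn_ord j).
have q0 : (0 < q)%N by apply: leq_trans mq.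
set sj := s j.
have u1 : forall z : R[i], z ^+ q = 1 -> `|z| = 1.
  by move=> z zq; apply/eqP; rewrite -(pexpr_eq1 q0) ?normr_ge0 // -normrX zq normr1.
have s1 : forall k, `|s k| = 1 by move=> k; apply: u1.
set A := \poly_(l < q) sj ^+ (q.-1 - l).
have HA : A * ('X - sj%:P) = 'X^q - 1 := geomA _ _ _ (sq1 j).
set rs := map s (enum 'I_m).
have [Q0 HQ0] : exists Q0, 'X^q - 1 = Q0 * \prod_(z <- rs) ('X - z%:P).
  apply: uniq_roots_prod_XsubC.
    apply/allP => z /mapP [k _ ->]; rewrite /root !hornerE sq1 subrr //.
  by rewrite uniq_rootsE map_inj_uniq ?enum_uniq.
have HP : \prod_(z <- rs) ('X - z%:P) = ('X - sj%:P) * Npoly s j.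
  rewrite big_map big_enum /= (bigD1 j) //=.
have Nmon : Npoly s j \is monic by apply: monic_prod_XsubC.
have N0 : Npoly s j != 0 by apply: monic_neq0.
have sizeN : size (Npoly s j) = m.
  have := size_prod_XsubC rs id; rewrite HP size_mul ?polyXsubC_eq0 //.
  by rewrite size_XsubC size_map size_enum_ord /= => -[].
have HA2 : A = Q0 * Npoly s j.
  apply: (mulIf (_ : 'X - sj%:P != 0)); first by rewrite polyXsubC_eq0.
  rewrite HA HQ0 HP; ring.
have lcA : lead_coef A = 1.
  rewrite lead_coef_poly // ?subnn ?expr0 ?oner_neq0 //.
have sizeA : size A = q.
  by rewrite size_poly_eq // subnn expr0 oner_neq0.
have [zs Hzs] := closed_field_poly_normal Q0.
have lcQ : lead_coef Q0 = 1.
  by move: lcA; rewrite HA2 lead_coefM (monicP Nmon) mulr1.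
rewrite lcQ scale1r in Hzs.
set PZ := \prod_(z <- zs) ('X - z%:P) in Hzs.
have PZ0 : PZ != 0 by apply: monic_neq0; apply: monic_prod_XsubC.
have sizezs : size zs = (q - m)%N.
  move: sizeA; rewrite HA2 Hzs size_mul // sizeN size_prod_XsubC; lia.
have zs1 : forall z, z \in zs -> `|z| = 1.
  move=> z zin; apply: u1.
  have : root PZ z by rewrite root_prod_XsubC.
  move=> /rootP PZz.
  have : ('X^q - 1).[z] = 0 by rewrite -HA HA2 Hzs !hornerE PZz !mul0r.
  by rewrite !hornerE => /eqP; rewrite subr_eq0 => /eqP.
have Nb : forall i, `|(Npoly s j)`_i| <= ('C(i + (0 + size zs), 0 + size zs))%:R.
  apply: (coef_prod_bound _ zs zs1 (Npoly s j) 0) => l.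
  have -> : Npoly s j * \prod_(z <- zs) ('X - z%:P) = A by rewrite HA2 Hzs mulrC.
  rewrite coef_poly bin0.
  case: ifP => _; first by rewrite normrX s1 expr1n.
  by rewrite normr0.
have HD : A.[sj] = PZ.[sj] * Dval s j.
  rewrite HA2 Hzs hornerM; congr (_ * _).
  rewrite /Npoly horner_prod; apply: eq_bigr => k _; by rewrite hornerXsubC.
have Asj : A.[sj] = q%:R * sj ^+ q.-1.
  rewrite horner_poly (eq_bigr (fun _ => sj ^+ q.-1)).
    by rewrite sumr_const card_ord mulr_natl.
  move=> l _; rewrite -exprD subnK //; have := ltn_ord l; lia.
have normA : `|A.[sj]| = q%:R by rewrite Asj normrM normr_nat normrX s1 expr1n mulr1.
have PZb : `|PZ.[sj]| <= 2 ^+ size zs.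
  rewrite /PZ horner_prod.
  rewrite (eq_bigr (fun z => sj - z)); last by move=> z _; rewrite hornerXsubC.
  exact: (prod_norm_le2 _ _ _ (s1 j) zs1).
have D0 : Dval s j != 0.
  apply/eqP => D0; move: normA; rewrite HD D0 mulr0 normr0 => /eqP.
  by rewrite eq_sym pnatr_eq0 => /eqP q00; rewrite q00 in q0.
split => // i.
have qn0 : (q%:R : R[i]) != 0 by rewrite pnatr_eq0 -lt0n.
have HDn : `|Dval s j|^-1 = `|PZ.[sj]| / q%:R.
  have Dn0 : `|Dval s j| != 0 by rewrite normr_eq0.
  apply: (mulfI Dn0); rewrite mulfV // mulrA [_ * `|PZ.[sj]|]mulrC.
  by rewrite -normrM -HD normA mulfV.
rewrite normrM normfV HDn.
have step : `|PZ.[sj]| / q%:R * `|(Npoly s j)`_i| <=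
    (2 ^+ size zs / q%:R) * ('C(i + size zs, size zs))%:R.
  apply: ler_pM => //.
    by rewrite divr_ge0.
    by rewrite ler_wpM2r // invr_ge0.
apply: (le_trans step).
have iq : (i + size zs <= q)%N by rewrite sizezs; have := ltn_ord i; lia.
rewrite mulrAC ler_pdivrMr ?ltr0n //.
rewrite -!natrX -!natrM ler_nat.
rewrite mulnC.
apply: (leq_trans (bin_pow2 _ _)).
apply: (leq_trans (_ : _ <= 2 * q ^ (q - m))%N); last by rewrite leq_pmulr.
rewrite leq_mul2l /= sizezs.
apply: leq_pow_base; rewrite -sizezs //.
Qed.


Theorem theorem1 (R : realType) :
  exists C : R, forall (q m : nat) (s : 'I_m -> R[i]),
    odd q -> (0 < m)%N -> (m < q)%N ->
    injective s ->
    (forall j, exists2 k : nat, (k < q)%N & s j = omega R q ^+ k) ->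
    (cond_number (vandermonde s) <=
       (C * powR (q%:R : R) (q%:R - m%:R + 11 / 2))%:E)%E.
Proof.
exists 2 => q m s qodd m0 mq sinj sroot.
have q0 : (0 < q)%N by apply: leq_trans mq.
have mleq : (m <= q)%N := ltnW mq.
have sq1 : forall k, s k ^+ q = 1.
  move=> k; have [e _ ->] := sroot k.
  by rewrite -exprM mulnC exprM omega_q // expr1n.
have s1 : forall k, `|s k| = 1.
  by move=> k; apply/eqP; rewrite -(pexpr_eq1 q0) ?normr_ge0 // -normrX sq1 normr1.
set W := \matrix_(j, i) ((Dval s j)^-1 * (Npoly s j)`_i) : 'M[R[i]]_m.
have WV : W *m vandermonde s = 1%:M.
  apply/matrixP => j k; rewrite !mxE.
  have [D0 sizeN _] := lag R q m s j mleq sinj sq1.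
  rewrite (eq_bigr (fun i : 'I_m => (Dval s j)^-1 * ((Npoly s j)`_i * s k ^+ i))); last first.
    by move=> i _; rewrite !mxE mulrA.
  rewrite -mulr_sumr -(horner_coef_wide _ (_ : size (Npoly s j) <= m)%N) ?sizeN //.
  rewrite /Npoly horner_prod.
  case: eqVneq => [<-|jk].
    rewrite (eq_bigr (fun l => s j - s l)) ?mulVf //.
    by move=> l _; rewrite hornerXsubC.
  rewrite (bigD1 k) /=; last by rewrite eq_sym.
  by rewrite hornerXsubC subrr mul0r mulr0.
have [Wu Vu] := mulmx1_unit WV.
have invV : invmx (vandermonde s) = W.
  by rewrite -[LHS]mul1mx -WV -mulmxA mulmxV ?mulmx1.
rewrite /cond_number Vu invV lee_fin.
set r := (q - m)%N.
have sV : sigma_max (vandermonde s) <= m%:R * 1.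
  apply: sigma_bound => // i j; rewrite mxE normrX s1 expr1n rmorph1 //.
have sW : sigma_max W <= m%:R * (2 * q%:R ^+ r).
  apply: sigma_bound; first by rewrite mulr_ge0 // exprn_ge0.
  move=> j i; rewrite mxE; have [_ _ H] := lag R q m s j mleq sinj sq1.
  by rewrite rmorphM rmorphXn /= !rmorph_nat; apply: H.
have qge1 : (1 : R) <= q%:R by rewrite ler1n.
have mq' : (m%:R : R) <= q%:R by rewrite ler_nat.
apply: (le_trans (ler_pM (sqrtr_ge0 _) (sqrtr_ge0 _) sV sW)).
apply: (le_trans (_ : _ <= 2 * q%:R ^+ (r + 2))).
  have -> : (m%:R * 1 * (m%:R * (2 * q%:R ^+ r)) : R) = 2 * q%:R ^+ r * (m%:R * m%:R) by ring.
  have -> : (2 * q%:R ^+ (r + 2) : R) = 2 * q%:R ^+ r * (q%:R * q%:R) by rewrite exprD; ring.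
  have m00 : (0 : R) <= m%:R by rewrite ler0n.
  apply: ler_wpM2l; first by rewrite mulr_ge0 // exprn_ge0 // ler0n.
  exact: ler_pM.
apply: ler_wpM2l => //.
have q00 : (0 : R) <= q%:R by rewrite ler0n.
rewrite -(powR_mulrn _ q00).
apply: ler_powR => //.
rewrite natrD natrB //.
have h : (2 : R) <= 11 / 2.
  by rewrite ler_pdivlMr // -natrM ler_nat.
by rewrite addrC [_ + 11 / 2]addrC lerD2r.
Qed.
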